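(* Let $(\mathbb{X},d,\mu)$ be a proper, geodesic metric measure space, $\Omega\subset\mathbb{X}$ a bounded domain and $\varrho$ an admissible radius function in $\Omega$. Suppose that for every compact $K\subset\Omega$ a modulus of continuity $\mathcal{W}_{\mu,K}$ is given such that $|\mathcal{M}^nv(x)-\mathcal{M}^nv(y)|\le\|v\|_\infty\mathcal{W}_{\mu,K}(d(x,y))$ for all $v\in L^\infty(\Omega)$, $x,y\in K$, $n\in\mathbb{N}$. Let $|\alpha|\leq1$, $u\in C(\overline\Omega)$, $K\subset\Omega$ compact, and let $\omega$ be a concave modulus of continuity for $u$ on $\widetilde K$. Then for all $x,y\in K$, $$|\mathcal{T}_\alpha u(x)-\mathcal{T}_\alpha u(y)|\leq|\alpha|\,\omega\left(\widehat\omega_\varrho(d(x,y))\right)+(1-\alpha)\|u\|_\infty\mathcal{W}_{\mu,K}(d(x,y)).$$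
   Context: A metric space is proper if closed bounded sets are compact, and geodesic if any two points $x,y$ are joined by a curve of length $d(x,y)$. A metric measure space is a metric space with a positive Borel regular measure $\mu$ with $0<\mu(B)<\infty$ for every ball $B$. An admissible radius function in $\Omega$ is $\varrho\in C(\overline\Omega)$, $\varrho\ge0$, with $0<\varrho(x)\leq\mathrm{dist}(x,\partial\Omega)$ for $x\in\Omega$ and $\varrho=0$ exactly on $\partial\Omega$. $B_x=\overline{B}(x,\varrho(x))$, $\widetilde K=\bigcup_{x\in K}B_x$. For $x\in\Omega$: $\mathcal{M}u(x)=\frac{1}{\mu(B_x)}\int_{B_x}u\,d\mu$, $\mathcal{S}u(x)=\frac12(\sup_{B_x}u+\inf_{B_x}u)$, $\mathcal{T}_\alpha u=\alpha\mathcal{S}u+(1-\alpha)\mathcal{M}u$. A modulus of continuity is a nondecreasing continuous $\omega:[0,\mathrm{diam}\,\Omega]\to[0,\infty)$ with $\omega(0)=0$. Fix a concave modulus of continuity $\omega_{\varrho,\Omega}$ for $\varrho$ on $\Omega$ with $\omega_{\varrho,\Omega}(\mathrm{diam}\,\Omega)\le\mathrm{diam}\,\Omega$; set $\widehat\omega_\varrho(t)=t$ if $\omega_{\varrho,\Omega}(t)\le t$ for all $t\in[0,\mathrm{diam}\,\Omega]$, and otherwise $\widehat\omega_\varrho(t)=\frac{\mathrm{diam}\,\Omega}{\omega_{\varrho,\Omega}(\mathrm{diam}\,\Omega)}\omega_{\varrho,\Omega}(t)$. *)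

(* Defs.v *)
From HB Require Import structures.
From mathcomp Require Import all_boot all_order all_algebra.
From mathcomp Require Import all_classical all_reals all_analysis.
Set Implicit Arguments. Unset Strict Implicit. Unset Printing Implicit Defensive.
Import Order.TTheory GRing.Theory Num.Theory.
Local Open Scope classical_set_scope.
Local Open Scope ring_scope.

Section MetricDefs.
Context {R : realType} {X : Type} (dist : X -> X -> R).

Definition is_metric : Prop :=
  (forall x y, 0 <= dist x y) /\ (forall x y, dist x y = 0 <-> x = y) /\
  (forall x y, dist x y = dist y x) /\
  (forall x y z, dist x z <= dist x y + dist y z).

Definition oball (x : X) (r : R) : set X := [set y | dist x y < r].
Definition cball (x : X) (r : R) : set X := [set y | dist x y <= r].

Definition mopen (A : set X) : Prop :=
  forall x, A x -> exists2 r : R, 0 < r & oball x r `<=` A.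
Definition mclosed (A : set X) : Prop := mopen (~` A).

Definition mcompact (K : set X) : Prop :=
  forall (I : Type) (F : I -> set X), (forall i, mopen (F i)) ->
    K `<=` \bigcup_i F i ->
    exists2 D : set I, finite_set D & K `<=` \bigcup_(i in D) F i.

Definition mbounded (A : set X) : Prop :=
  exists (x : X) (r : R), A `<=` cball x r.

Definition mproper : Prop :=
  forall A, mclosed A -> mbounded A -> mcompact A.

Definition curve_continuous (g : R -> X) (a b : R) : Prop :=
  forall t, a <= t <= b -> forall e : R, 0 < e -> exists2 del : R, 0 < del &
    forall s, a <= s <= b -> `|s - t| < del -> dist (g s) (g t) < e.

Definition curve_length (g : R -> X) (a b : R) : \bar R :=
  ereal_sup [set (\sum_(i < (size s).-1) dist (g (nth 0 s i)) (g (nth 0 s i.+1)))%:E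
            | s in [set s : seq R | sorted <=%R s /\ all (fun t => a <= t <= b) s]].

Definition mgeodesic : Prop :=
  forall x y, exists (a b : R) (g : R -> X),
    [/\ a <= b, g a = x, g b = y, curve_continuous g a b &
        curve_length g a b = (dist x y)%:E].

Definition mconnected (A : set X) : Prop :=
  forall U V, mopen U -> mopen V -> A `<=` U `|` V -> A `&` U `&` V = set0 ->
    A `&` U = set0 \/ A `&` V = set0.

Definition mdomain (O : set X) : Prop :=
  [/\ O !=set0, mopen O & mconnected O].

Definition mclosure (A : set X) : set X :=
  [set x | forall r : R, 0 < r -> exists2 y, A y & dist x y < r].

Definition mboundary (A : set X) : set X := mclosure A `&` mclosure (~` A).

Definition mdiam (A : set X) : R := sup [set dist x y | x in A & y in A].

Definition cont_on (A : set X) (f : X -> R) : Prop :=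
  forall x, A x -> forall e : R, 0 < e -> exists2 del : R, 0 < del &
    forall y, A y -> dist x y < del -> `|f x - f y| < e.

Definition admissible_radius (O : set X) (rho : X -> R) : Prop :=
  [/\ cont_on (mclosure O) rho,
      (forall x, mclosure O x -> 0 <= rho x),
      (forall x, O x -> 0 < rho x /\ forall z, mboundary O z -> rho x <= dist x z) &
      (forall x, mclosure O x -> (rho x = 0 <-> mboundary O x))].

Definition modulus (O : set X) (w : R -> R) : Prop :=
  [/\ (forall s t, 0 <= s -> s <= t -> t <= mdiam O -> w s <= w t),
      (forall t, 0 <= t <= mdiam O -> forall e : R, 0 < e -> exists2 del : R, 0 < del &
         forall s, 0 <= s <= mdiam O -> `|s - t| < del -> `|w s - w t| < e),
      w 0 = 0 & (forall t, 0 <= t <= mdiam O -> 0 <= w t)].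

Definition concave_on (O : set X) (w : R -> R) : Prop :=
  forall s t l : R, 0 <= s <= mdiam O -> 0 <= t <= mdiam O -> 0 <= l <= 1 ->
    l * w s + (1 - l) * w t <= w (l * s + (1 - l) * t).

Definition modulus_for (O : set X) (w : R -> R) (f : X -> R) (A : set X) : Prop :=
  modulus O w /\ forall x y, A x -> A y -> `|f x - f y| <= w (dist x y).

Definition Bx (rho : X -> R) (x : X) : set X := cball x (rho x).

Definition Ktilde (rho : X -> R) (K : set X) : set X := \bigcup_(x in K) Bx rho x.

Definition omega_hat (O : set X) (wr : R -> R) (t : R) : R :=
  if `[< forall s, 0 <= s <= mdiam O -> wr s <= s >] then t
  else mdiam O / wr (mdiam O) * wr t.
End MetricDefs.

Section MeasDefs.
Context {R : realType} {dsp : measure_display} {X : measurableType dsp}.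
Context (dist : X -> X -> R) (mu : {measure set X -> \bar R}).

Definition borel_sets : Prop :=
  (@measurable _ X) = <<s [set A | mopen dist A] >>.

(* averaging operator: for x in O the mean over B_x; outside O (in particular
   on the boundary, where B_x = {x}) it is the value itself *)
Definition Mop (O : set X) (rho : X -> R) (v : X -> R) (x : X) : R :=
  if `[< O x >] then
    fine (\int[mu]_(y in Bx dist rho x) (v y)%:E) / fine (mu (Bx dist rho x))
  else v x.

Definition Sop (rho : X -> R) (u : X -> R) (x : X) : R :=
  (sup [set u y | y in Bx dist rho x] + inf [set u y | y in Bx dist rho x]) / 2.

Definition Top (O : set X) (rho : X -> R) (alpha : R) (u : X -> R) (x : X) : R :=
  alpha * Sop rho u x + (1 - alpha) * Mop O rho u x.

Definition linf_norm (A : set X) (v : X -> R) : \bar R :=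
  ereal_inf [set M : \bar R | mu (A `&` [set x | (M < (`|v x|)%:E)%E]) = 0%E].

Definition Linf (A : set X) (v : X -> R) : Prop :=
  measurable_fun A v /\ (linf_norm A v < +oo)%E.
End MeasDefs.

(* Main.v *)
Require Import Defs.
From HB Require Import structures.
From mathcomp Require Import all_boot all_order all_algebra.
From mathcomp Require Import all_classical all_reals all_analysis.
From mathcomp Require Import lra ring.
Import Order.TTheory GRing.Theory Num.Theory.
Local Open Scope classical_set_scope.
Local Open Scope ring_scope.



Section Metric.
Context {R : realType} {X : Type} {d : X -> X -> R} (Hm : is_metric d).

Lemma d_ge0 x y : 0 <= d x y. Proof. by case: Hm. Qed.
Lemma d_xx x : d x x = 0. Proof. by case: Hm => _ [H _]; apply H. Qed.
Lemma d_eq x y : d x y = 0 -> x = y. Proof. by case: Hm => _ [H _]; apply H. Qed.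
Lemma d_sym x y : d x y = d y x. Proof. by case: Hm => _ [_ []]. Qed.
Lemma d_tri x y z : d x z <= d x y + d y z. Proof. by case: Hm => _ [_ [_]]. Qed.

Lemma union_balls_open (S : X -> R -> Prop) :
  mopen d [set z | exists x del, S x del /\ d x z < del].
Proof.
move=> z [x [del [Sx dz]]]; exists (del - d x z); first by rewrite subr_gt0.
move=> w /= dw; exists x, del; split => //.
have := d_tri x z w; rewrite /oball /= in dw; lra.
Qed.

Lemma oball_open x r : mopen d (oball d x r).
Proof.
have -> : oball d x r = [set z | exists y del, (y = x /\ del = r) /\ d y z < del].
  rewrite eqEsubset; split => z /=; first by move=> h; exists x, r.
  by move=> [y [del [[-> ->] h]]].
exact: union_balls_open.
Qed.

Lemma mclos_sub A : A `<=` mclosure d A.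
Proof. by move=> x Ax r r0; exists x => //; rewrite d_xx. Qed.

Lemma mclos_closed_seq A w :
  (forall e, 0 < e -> exists2 p, mclosure d A p & d w p < e) -> mclosure d A w.
Proof.
move=> H r r0; have [p Ap dp] := H (r / 2) ltac:(lra).
have [q Aq dq] := Ap (r / 2) ltac:(lra).
exists q => //; have := d_tri w p q; lra.
Qed.

Lemma mclos_closed A : mclosed d (mclosure d A).
Proof.
move=> x /= nx.
have [r r0 hr] : exists2 r : R, 0 < r & forall y, A y -> r <= d x y.
  apply: contra_notP nx => H r r0; apply: contra_notP H => H.
  exists r => // y Ay; rewrite leNgt; apply/negP => hy; apply: H; by exists y.
exists (r / 2); first lra.
move=> z /= dz cz; have [y Ay dy] := cz (r / 2) ltac:(lra).
have := hr y Ay; have := d_tri x z y; rewrite /oball /= in dz; lra.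
Qed.

Lemma mclos_bounded A : mbounded d A -> mbounded d (mclosure d A).
Proof.
move=> [x [r hr]]; exists x, (r + 1) => z cz.
have [y Ay dy] := cz 1 ltr01; have := hr y Ay; rewrite /cball /= => h.
have := d_tri x y z; rewrite (d_sym z y) in dy; lra.
Qed.

End Metric.



Section Bnd.
Context {R : realType} {X : Type} {d : X -> X -> R} (Hm : is_metric d).

Lemma compact_cont_bounded C u : mcompact d C -> cont_on d C u ->
  exists M : R, forall x, C x -> `|u x| <= M.
Proof.
move=> cC cu.
pose F (n : nat) := [set z | exists x del, (C x /\ 0 < del /\
   (forall y, C y -> d x y < del -> `|u x - u y| < 1) /\ `|u x| + 1 < n%:R) /\ d x z < del].
have oF n : mopen d (F n) by apply: union_balls_open.
have cov : C `<=` \bigcup_n F n.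
  move=> x Cx; have [del del0 hdel] := cu x Cx 1 ltr01.
  have hb := archi_boundP (addr_ge0 (normr_ge0 (u x)) ler01).
  exists (Num.Def.archi_bound (`|u x| + 1)) => //; exists x, del.
  by split; [split; [|split; [|split]]|]; rewrite ?d_xx.
have [D fD sub] := cC nat F oF cov.
have [s Ds] := (finite_seqP D).1 fD.
exists (\max_(i <- s) i)%:R => z Cz.
have [n Dn [x [del [[Cx [_ [h1 h2]]] h3]]]] := sub z Cz.
have hz := h1 z Cz h3.
have nle : (n <= \max_(i <- s) i)%N.
  by apply: leq_bigmax_seq => //; rewrite Ds in Dn; exact: Dn.
have : (n%:R <= (\max_(i <- s) i)%:R :> R) by rewrite ler_nat.
have : `|u z| <= `|u x| + `|u x - u z|.
  have := ler_normD (u z - u x) (u x); rewrite subrK distrC; lra.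
lra.
Qed.
End Bnd.

Section Meas.
Context {R : realType} {dsp : measure_display} {X : measurableType dsp}.
Context (d : X -> X -> R) (mu : {measure set X -> \bar R}) (Hm : is_metric d).
Context (Hb : borel_sets d).

Lemma open_meas A : mopen d A -> measurable A.
Proof. by move=> oA; rewrite Hb; apply: sub_sigma_algebra. Qed.

Lemma closed_meas A : mclosed d A -> measurable A.
Proof. by move=> cA; rewrite -(setCK A); apply: measurableC; apply: open_meas. Qed.

Lemma cont_meas C u : mclosed d C -> cont_on d C u -> measurable_fun C u.
Proof.
move=> cC cu; apply: (measurability _ (measurable_realfun.RGenInftyO.measurableE R)).
move=> _ [_ [r ->] <-].
pose U := [set z | exists x del, (C x /\ u x < r /\ 0 < del /\
   (forall y, C y -> d x y < del -> `|u x - u y| < r - u x)) /\ d x z < del].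
have -> : C `&` u @^-1` `]-oo, r[ = C `&` U.
  apply/seteqP; split => z /= [Cz hz]; split => //.
    rewrite in_itv /= in hz.
    have [del del0 hdel] := cu z Cz (r - u z) ltac:(lra).
    by exists z, del; split; [split; [|split; [|split]]|]; rewrite ?d_xx.
  move: hz => [x [del [[Cx [ux [_ h]]] dxz]]]; have := h z Cz dxz.
  rewrite in_itv /=; move=> hh; have := ler_norm (u z - u x); rewrite distrC; lra.
apply: measurableI; first exact: closed_meas.
apply: open_meas; exact: union_balls_open.
Qed.

Lemma linf_le C u M : (forall x, C x -> `|u x| <= M) ->
  (linf_norm mu C u <= M%:E)%E.
Proof.
move=> hM; apply: ereal_inf_lbound => /=.
have -> : C `&` [set x | (M%:E < (`|u x|)%:E)%E] = set0.
  apply/seteqP; split => x //= [Cx]; rewrite lte_fin; have := hM x Cx; lra.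
exact: measure0.
Qed.
End Meas.



Section Geod.
Context {R : realType} {X : Type} {d : X -> X -> R} (Hm : is_metric d).

Lemma length_split g a b t : a <= t <= b ->
  ((d (g a) (g t) + d (g t) (g b))%:E <= curve_length d g a b)%E.
Proof.
move=> /andP[hat htb]; apply: ereal_sup_ubound; exists [:: a; t; b].
  split; first by rewrite /= hat htb.
  by rewrite /= !lexx hat htb (le_trans hat htb).
by rewrite /= !big_ord_recr big_ord0 /= add0r.
Qed.

Lemma crossing g a b (P : X -> Prop) : a <= b -> curve_continuous d g a b ->
  (forall w, (forall e, 0 < e -> exists2 p, P p & d w p < e) -> P w) ->
  P (g a) -> ~ P (g b) ->
  exists t, [/\ a <= t <= b, P (g t) &
     forall e, 0 < e -> exists2 q, ~ P q & d (g t) q < e].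
Proof.
move=> ab gc Pc Pa Pb.
pose S := [set t | a <= t <= b /\ P (g t)].
have Sa : S a by split => //; rewrite lexx ab.
have hub : has_ubound S by exists b => t [/andP[_ ->]].
have hs : has_sup S by split => //; exists a.
have ats : a <= sup S by apply: ub_le_sup.
have tsb : sup S <= b by apply: ge_sup; [exists a | move=> t [/andP[_ ->]]].
have atb : a <= sup S <= b by rewrite ats tsb.
have Pts : P (g (sup S)).
  apply: Pc => e e0; have [del del0 hd] := gc _ atb e e0.
  have [s Ss hs'] := sup_adherent del0 hs.
  exists (g s); first by case: Ss.
  have sts : s <= sup S by apply: ub_le_sup.
  rewrite d_sym //; apply: hd; first by case: Ss.
  rewrite ler0_norm ?subr_le0 //; lra.
exists (sup S); split => // e e0.
have tsb' : sup S < b.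
  rewrite lt_neqAle tsb andbT; apply/eqP => h; apply: Pb; by rewrite -h.
have [del del0 hd] := gc _ atb e e0.
have [s [hs1 hs2 hs3]] : exists s, [/\ sup S < s, s <= b & s - sup S < del].
  by case: (leP (sup S + del / 2) b) => h; [exists (sup S + del / 2) | exists b];
    split; lra.
exists (g s).
  move=> Ps; have : s <= sup S by apply: ub_le_sup => //; split => //; apply/andP; split; lra.
  lra.
rewrite d_sym //; apply: hd; first by apply/andP; split; lra.
rewrite ger0_norm; lra.
Qed.

Lemma geod_proj (Hg : mgeodesic d) x z r : 0 <= r -> r < d x z ->
  exists w, d x w <= r /\ d w z <= d x z - r.
Proof.
move=> r0 rz; have [a [b [g [ab ga gb gc gl]]]] := Hg x z.
have c1 : forall w, (forall e, 0 < e -> exists2 p, d x p <= r & d w p < e) -> d x w <= r.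
  move=> w H; apply/ler_addgt0Pr => e e0; have [p hp dp] := H e e0.
  have := d_tri Hm x p w; rewrite (d_sym Hm p w); lra.
have c2 : d x (g a) <= r by rewrite ga d_xx.
have c3 : ~ d x (g b) <= r by rewrite gb => h; lra.
have [t [/andP[hat htb] Pt nP]] := @crossing g a b (fun p => d x p <= r) ab gc c1 c2 c3.
exists (g t); split => //.
have rle : r <= d x (g t).
  rewrite leNgt; apply/negP => h.
  have [q nq dq] := nP (r - d x (g t)) ltac:(lra).
  apply: nq; have := d_tri Hm x (g t) q; lra.
have := @length_split g a b t; rewrite hat htb gl ga gb lee_fin => /(_ isT); lra.
Qed.

Lemma ball_in_closure (Hg : mgeodesic d) O rho (Hr : admissible_radius d O rho) x y :
  O x -> d x y <= rho x -> mclosure d O y.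
Proof.
move=> Ox dxy; apply: contrapT => ny.
have [a [b [g [ab ga gb gc gl]]]] := Hg x y.
have c1 : forall w, (forall e, 0 < e -> exists2 p, mclosure d O p & d w p < e) -> mclosure d O w.
  by move=> w H; apply: mclos_closed_seq.
have c2 : mclosure d O (g a) by rewrite ga; exact: mclos_sub.
have c3 : ~ mclosure d O (g b) by rewrite gb.
have [t [/andP[hat htb] Pt nP]] := @crossing g a b (mclosure d O) ab gc c1 c2 c3.
have bd : mboundary d O (g t).
  split => // e e0; have [q nq dq] := nP e e0; exists q => //.
  by move=> Oq; apply: nq; apply: mclos_sub.
case: Hr => _ _ H3 _; have [_ hb] := H3 x Ox; have := hb _ bd.
have := @length_split g a b t; rewrite hat htb gl ga gb lee_fin => /(_ isT) hl hr.
have dz : d (g t) y = 0.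
  apply/eqP; rewrite eq_le d_ge0 // andbT; lra.
have := d_eq Hm _ _ dz => e; apply: ny; rewrite -e; exact: Pt.
Qed.

Lemma mclos_diam O p q : mbounded d O -> mclosure d O p -> mclosure d O q ->
  d p q <= mdiam d O.
Proof.
move=> [x0 [r hr]] cp cq.
have hub : has_ubound [set d x y | x in O & y in O].
  exists (r + r) => _ [u Ou [v Ov <-]].
  have := hr u Ou; have := hr v Ov; rewrite /cball /= => h1 h2.
  have := d_tri Hm u x0 v; rewrite (d_sym Hm u x0); lra.
apply/ler_addgt0Pr => e e0.
have [p' Op' dp] := cp (e / 2) ltac:(lra).
have [q' Oq' dq] := cq (e / 2) ltac:(lra).
have : d p' q' <= mdiam d O by apply: ub_le_sup => //; exists p' => //; exists q'.
have := d_tri Hm p p' q; have := d_tri Hm p' q' q; rewrite (d_sym Hm q' q); lra.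
Qed.
End Geod.



Lemma omega_hat_prop {R : realType} {X : Type} (d : X -> X -> R) O wr t :
  modulus d O wr -> concave_on d O wr -> wr (mdiam d O) <= mdiam d O ->
  0 <= t <= mdiam d O ->
  [/\ t <= omega_hat d O wr t, wr t <= omega_hat d O wr t &
      omega_hat d O wr t <= mdiam d O].
Proof.
move=> [mono _ w0 wpos] conc wDD /andP[t0 tD].
rewrite /omega_hat; case: asboolP => H.
  by split => //; apply: H; rewrite t0 tD.
set D := mdiam d O in wDD tD mono wpos conc H *.
have [s0 [hs0 hws]] : exists s, 0 <= s <= D /\ s < wr s.
  apply: contrapT => H'; apply: H => s hs; rewrite leNgt; apply/negP => hh.
  by apply: H'; exists s.
move: hs0 => /andP[s00 s0D].
have D0 : 0 <= D by apply: le_trans s0D.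
have wsD : wr s0 <= wr D by apply: mono.
have wD0 : 0 < wr D by lra.
have Dpos : 0 < D by lra.
have wt0 : 0 <= wr t by apply: wpos; rewrite t0 tD.
have wtD : wr t <= wr D by apply: mono.
set c := D / wr D.
have cw : c * wr D = D by rewrite /c divfK // gt_eqF.
have c1 : 1 <= c by rewrite /c ler_pdivlMr // mul1r.
have hq : t / D * wr D <= wr t.
  have := conc D 0 (t / D); rewrite w0 !mulr0 !addr0 divfK ?gt_eqF //.
  apply; first by rewrite D0 lexx.
    by rewrite lexx D0.
  by rewrite divr_ge0 //= ler_pdivrMr // mul1r.
have qD : t / D * D = t by rewrite divfK // gt_eqF.
split.
- rewrite {1}(_ : t = c * (t / D * wr D)); last by rewrite mulrCA cw qD.
  apply: ler_wpM2l => //; lra.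
- have : wr t * 1 <= wr t * c by apply: ler_wpM2l.
  by rewrite mulr1 mulrC.
- by rewrite -[X in _ <= X]cw; apply: ler_wpM2l => //; lra.
Qed.

Lemma Sop_bound {R : realType} {X : Type} (A B : set X) (u : X -> R) (wm wm' V : R) :
  A !=set0 -> B !=set0 ->
  (exists M, forall z, A z \/ B z -> `|u z| <= M) ->
  (forall z, B z -> exists2 w, A w & `|u z - u w| <= wm) ->
  (forall z, A z -> exists2 w, B w & `|u z - u w| <= wm') ->
  (wm + wm') / 2 <= V ->
  `|(sup [set u y | y in A] + inf [set u y | y in A]) / 2 -
    (sup [set u y | y in B] + inf [set u y | y in B]) / 2| <= V.
Proof.
move=> [a Aa] [b Bb] [M hM] hBA hAB hV.
set uA := [set u y | y in A]; set uB := [set u y | y in B].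
have neA : uA !=set0 by exists (u a), a.
have neB : uB !=set0 by exists (u b), b.
have ubA : has_ubound uA.
  exists M => _ [z Az <-]; have := hM z (or_introl Az); have := ler_norm (u z); lra.
have ubB : has_ubound uB.
  exists M => _ [z Bz <-]; have := hM z (or_intror Bz); have := ler_norm (u z); lra.
have lbA : has_lbound uA.
  exists (- M) => _ [z Az <-]; have := hM z (or_introl Az).
  have := ler_norm (- u z); rewrite normrN; lra.
have lbB : has_lbound uB.
  exists (- M) => _ [z Bz <-]; have := hM z (or_intror Bz).
  have := ler_norm (- u z); rewrite normrN; lra.
have key : forall (A B : set X) (uA uB : set R) wm,
    uA = [set u y | y in A] -> uB = [set u y | y in B] ->
    uA !=set0 -> uB !=set0 -> has_ubound uA -> has_lbound uA ->
    (forall z, B z -> exists2 w, A w & `|u z - u w| <= wm) ->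
    sup uB <= sup uA + wm /\ inf uA <= inf uB + wm.
  move=> A' B' uA' uB' w' -> -> neA' neB' ubA' lbA' h; split.
    apply: ge_sup => // _ [z Bz <-]; have [w Aw hw] := h z Bz.
    have : u w <= sup [set u y | y in A'] by apply: ub_le_sup => //; exists w.
    have := ler_norm (u z - u w); lra.
  rewrite -lerBlDr; apply: lb_le_inf => // _ [z Bz <-]; have [w Aw hw] := h z Bz.
  have : inf [set u y | y in A'] <= u w by apply: ge_inf => //; exists w.
  have := ler_norm (u w - u z); rewrite distrC; lra.
have [h1 h2] := key A B uA uB wm erefl erefl neA neB ubA lbA hBA.
have [h3 h4] := key B A uB uA wm' erefl erefl neB neA ubB lbB hAB.
rewrite ler_norml; apply/andP; split; lra.
Qed.



Theorem lemma4p2 (R : realType) (dsp : measure_display) (X : measurableType dsp)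
  (dist : X -> X -> R) (mu : {measure set X -> \bar R})
  (Hmetric : is_metric dist) (Hborel : borel_sets dist)
  (Hproper : mproper dist) (Hgeod : mgeodesic dist)
  (Hballs : forall (x : X) (r : R), 0 < r ->
     (0 < mu (oball dist x r) < +oo)%E /\ (0 < mu (cball dist x r) < +oo)%E)
  (Omega : set X) (HOmega : mdomain dist Omega) (Hbdd : mbounded dist Omega)
  (rho : X -> R) (Hrho : admissible_radius dist Omega rho)
  (wrho : R -> R)
  (Hwrho : modulus_for dist Omega wrho rho Omega /\ concave_on dist Omega wrho /\
           wrho (mdiam dist Omega) <= mdiam dist Omega)
  (W : set X -> R -> R)
  (HW : forall K, mcompact dist K -> K `<=` Omega ->
     modulus dist Omega (W K) /\
     forall (v : X -> R), Linf mu (mclosure dist Omega) v ->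
     forall x y, K x -> K y -> forall n : nat,
       (`|iter n.+1 (Mop dist mu Omega rho) v x - iter n.+1 (Mop dist mu Omega rho) v y|%:E
        <= linf_norm mu (mclosure dist Omega) v * (W K (dist x y))%:E)%E)
  (alpha : R) (Halpha : `|alpha| <= 1)
  (u : X -> R) (Hu : cont_on dist (mclosure dist Omega) u)
  (K : set X) (HK : mcompact dist K) (HKO : K `<=` Omega)
  (omega : R -> R)
  (Homega : modulus_for dist Omega omega u (Ktilde dist rho K) /\ concave_on dist Omega omega) :
  forall x y, K x -> K y ->
    (`|Top dist mu Omega rho alpha u x - Top dist mu Omega rho alpha u y|%:E
     <= (`|alpha| * omega (omega_hat dist Omega wrho (dist x y)))%:E
        + (1 - alpha)%:E * linf_norm mu (mclosure dist Omega) u * (W K (dist x y))%:E)%E.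
Proof.
move=> x y Kx Ky.
have Ox := HKO x Kx; have Oy := HKO y Ky.
set C := mclosure dist Omega.
have cC : mclosed dist C := mclos_closed Hmetric Omega.
have bC : mbounded dist C := mclos_bounded Hmetric _ Hbdd.
have kC : mcompact dist C := Hproper C cC bC.
have [M hM] := compact_cont_bounded Hmetric _ _ kC Hu.
have BC : forall z w, Omega z -> dist z w <= rho z -> C w.
  by move=> z w Oz; apply: (ball_in_closure Hmetric Hgeod _ _ Hrho).
have Lu : Linf mu C u.
  split; first exact: (cont_meas _ Hmetric Hborel _ _ cC Hu).
  by apply: le_lt_trans (linf_le mu _ _ _ hM) _; exact: ltry.
have [_ HWK] := HW K HK HKO.
have hMb := HWK u Lu x y Kx Ky 0%N; rewrite /= in hMb.
set D := mdiam dist Omega.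
have CD : forall p q, C p -> C q -> dist p q <= D.
  by move=> p q; apply: mclos_diam.
have dxy_D : dist x y <= D by apply: CD; apply: mclos_sub.
have dxy0 : 0 <= dist x y := d_ge0 Hmetric x y.
have [[hw1 hw1'] [hw2 hw3]] := Hwrho.
have [hoh1 hoh2 hoh3] := omega_hat_prop _ _ _ _ hw1 hw2 hw3 (introT andP (conj dxy0 dxy_D)).
have drho := hw1' x y Ox Oy.
have [[[om_mono _ om0 om_pos] om_u] om_conc] := Homega.
have rho0 : forall z, Omega z -> 0 <= rho z.
  by move=> z Oz; case: Hrho => _ _ H _; have [H1 _] := H z Oz; apply: ltW.
have proj : forall a b, Omega a -> Omega b -> forall z, Bx dist rho b z ->
    exists2 w, Bx dist rho a w & (dist z w = 0 \/ dist z w <= dist a b + rho b - rho a).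
  move=> a b Oa Ob z Bz.
  case: (leP (dist a z) (rho a)) => h.
    by exists z => //; left; apply: d_xx.
  have [w [h1 h2]] := geod_proj Hmetric Hgeod _ _ _ (rho0 a Oa) h.
  exists w => //; right; rewrite d_sym //.
  have := d_tri Hmetric a b z; rewrite /Bx /cball /= in Bz; lra.
pose cap e := if e <= 0 then 0 else if e <= D then e else D.
have D0 : 0 <= D by apply: le_trans dxy_D.
have capP : forall e, [/\ 0 <= cap e, cap e <= D, (0 < e -> cap e <= e), (e <= 0 -> cap e = 0) &
     forall s, 0 <= s -> (s = 0 \/ s <= e) -> s <= D -> s <= cap e].
  move=> e; rewrite /cap; case: (leP e 0) => h1.
    by split => //; try (move=> h; lra); move=> s s0 [->|hs] _ //; lra.
  case: (leP e D) => h2.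
    by split => //; try lra; try (move=> h; lra); move=> s s0 [->|hs] _ //; lra.
  by split => //; try lra; try (move=> h; lra); move=> s s0 [->|hs] _ //; lra.
have dyx : dist y x = dist x y by rewrite d_sym.
have hS : `|Sop dist rho u x - Sop dist rho u y| <=
          omega (omega_hat dist Omega wrho (dist x y)).
  rewrite /Sop.
  apply: (@Sop_bound _ _ _ _ _ (omega (cap (dist x y + rho y - rho x)))
                               (omega (cap (dist y x + rho x - rho y)))).
  - by exists x; rewrite /Bx /cball /= d_xx //; apply: rho0.
  - by exists y; rewrite /Bx /cball /= d_xx //; apply: rho0.
  - exists M => z [Bz|Bz]; apply: hM; [exact: (BC x) | exact: (BC y)].
  - move=> z Bz; have [w Bw hw] := proj x y Ox Oy z Bz; exists w => //.
    have Kz : Ktilde dist rho K z by exists y.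
    have Kw : Ktilde dist rho K w by exists x.
    apply: le_trans (om_u z w Kz Kw) _.
    have Cz : C z := BC y z Oy Bz.
    have Cw : C w := BC x w Ox Bw.
    have [c0 cD _ _ cs] := capP (dist x y + rho y - rho x).
    apply: om_mono => //; first exact: d_ge0.
    by apply: cs => //; [exact: d_ge0 | exact: CD].
  - move=> z Bz; have [w Bw hw] := proj y x Oy Ox z Bz; exists w => //.
    have Kz : Ktilde dist rho K z by exists x.
    have Kw : Ktilde dist rho K w by exists y.
    apply: le_trans (om_u z w Kz Kw) _.
    have Cz : C z := BC x z Ox Bz.
    have Cw : C w := BC y w Oy Bw.
    have [c0 cD _ _ cs] := capP (dist y x + rho x - rho y).
    apply: om_mono => //; first exact: d_ge0.
    by apply: cs => //; [exact: d_ge0 | exact: CD].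
  - have [a0 aD a1 a2 _] := capP (dist x y + rho y - rho x).
    have [b0 bD b1 b2 _] := capP (dist y x + rho x - rho y).
    set c1 := cap (dist x y + rho y - rho x) in a0 aD a1 a2 *.
    set c2 := cap (dist y x + rho x - rho y) in b0 bD b1 b2 *.
    have hsum : c1 + c2 <= 2 * omega_hat dist Omega wrho (dist x y).
      move: drho; rewrite ler_norml => /andP[r1 r2].
      case: (leP (dist x y + rho y - rho x) 0) => h1; [have := a2 h1 | have := a1 h1];
      case: (leP (dist y x + rho x - rho y) 0) => h2;
      [have := b2 h2 | have := b1 h2 | have := b2 h2 | have := b1 h2]; lra.
    have hc : 1 / 2 * omega c1 + (1 - 1 / 2) * omega c2 <=
              omega (1 / 2 * c1 + (1 - 1 / 2) * c2).
      apply: om_conc; [rewrite a0 aD // | rewrite b0 bD // | ].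
      apply/andP; split; lra.
    have hm : omega (1 / 2 * c1 + (1 - 1 / 2) * c2) <=
              omega (omega_hat dist Omega wrho (dist x y)).
      apply: om_mono => //; lra.
    lra.
have a1 : 0 <= 1 - alpha by move: Halpha; rewrite ler_norml => /andP[h1 h2]; lra.
set Sx := Sop dist rho u x; set Sy := Sop dist rho u y.
set Mx := Mop dist mu Omega rho u x; set My := Mop dist mu Omega rho u y.
set V := omega (omega_hat dist Omega wrho (dist x y)).
rewrite /Top -/Sx -/Sy -/Mx -/My.
apply: (@le_trans _ _ ((`|alpha| * V)%:E + ((1 - alpha) * `|Mx - My|)%:E)).
  rewrite -EFinD lee_fin.
  have -> : alpha * Sx + (1 - alpha) * Mx - (alpha * Sy + (1 - alpha) * My) =
            alpha * (Sx - Sy) + (1 - alpha) * (Mx - My) by ring.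
  apply: le_trans (ler_normD _ _) _; rewrite !normrM (ger0_norm a1).
  by apply: lerD => //; apply: ler_wpM2l.
apply: leeD => //; rewrite EFinM -muleA; by apply: lee_wpmul2l => //; rewrite lee_fin.
Qed.
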